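(* Let $A\in \mathrm{GL}_{2g}(\mathbb{Z})$ be a hyperbolic matrix, and let $E^{c},E^{e}\subset\mathbb{R}^{2g}$ be its contracting and expanding subspaces. Let $\Lambda^+,\Lambda^-\subseteq\mathbb{Z}^{2g}$ be sublattices of rank $g$ such that $(\Lambda^+\otimes\mathbb{R})\cap E^c=0$ and $(\Lambda^-\otimes\mathbb{R})\cap E^e=0$. For $N\geq 1$ put $\Lambda_N^{\pm}=A^{\pm N}\Lambda^{\pm}$. Then the cardinality of $\mathbb{Z}^{2g}/(\Lambda_N^+ + \Lambda_N^-)$ grows exponentially with $N$, i.e. there exist constants $C>0$ and $r>1$ such that $\#\big(\mathbb{Z}^{2g}/(\Lambda_N^++\Lambda_N^-)\big)\geq C r^N$ for all $N\geq 1$.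
   Context: A matrix $A\in\mathrm{GL}_{2g}(\mathbb{Z})$ is called hyperbolic if $\mathbb{R}^{2g}$ is the direct sum of a $g$-dimensional contracting subspace $E^c$, spanned by $g$ eigenvectors with eigenvalues of modulus less than $1$, and a complementary $g$-dimensional expanding subspace $E^e$, spanned by $g$ eigenvectors with eigenvalues of modulus greater than $1$. *)

(* Defs.v *)
From HB Require Import structures.
From mathcomp Require Import all_boot all_order all_algebra.
From mathcomp Require Import complex.
From mathcomp Require Import reals.
Set Implicit Arguments. Unset Strict Implicit. Unset Printing Implicit Defensive.
Import Order.TTheory GRing.Theory Num.Theory.
Local Open Scope ring_scope.
Local Open Scope complex_scope.

(* Vectors of R^n, Z^n, C^n are ROW vectors; a matrix M acts on a column
   vector v as M v, i.e. on row vectors as v *m M^T. *)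

Definition mxZR (R : realType) m n (M : 'M[int]_(m, n)) : 'M[R]_(m, n) :=
  map_mx (fun z : int => z%:~R) M.
Definition mxRC (R : realType) m n (M : 'M[R]_(m, n)) : 'M[R[i]]_(m, n) :=
  map_mx (fun x : R => x%:C) M.

Definition in_lattice k n (B : 'M[int]_(k, n)) (v : 'rV[int]_n) : Prop :=
  exists c : 'rV[int]_k, v = c *m B.

Definition in_sum_lattice k1 k2 n (B1 : 'M[int]_(k1, n)) (B2 : 'M[int]_(k2, n))
  (v : 'rV[int]_n) : Prop :=
  exists v1 v2, [/\ in_lattice B1 v1, in_lattice B2 v2 & v = v1 + v2].

(* #(Z^n / (Lambda1 + Lambda2)) >= m : there are m pairwise distinct cosets. *)
Definition quot_card_ge k1 k2 n (B1 : 'M[int]_(k1, n)) (B2 : 'M[int]_(k2, n))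
  (m : nat) : Prop :=
  exists f : 'I_m -> 'rV[int]_n,
    forall i j, i != j -> ~ in_sum_lattice B1 B2 (f i - f j).

(* A in GL_{2g}(Z) (with 2g written g + g) is hyperbolic, witnessed by a basis
   of C^{2g} of eigenvectors (rows of V) with eigenvalues lam: the first g
   (rows lshift) have modulus < 1, the last g (rows rshift) modulus > 1. *)
Definition hyperbolic_basis (R : realType) g (A : 'M[int]_(g + g))
  (V : 'M[R[i]]_(g + g)) (lam : 'I_(g + g) -> R[i]) : Prop :=
  [/\ V \in unitmx,
      forall k, row k V *m (mxRC (@mxZR R _ _ A))^T = lam k *: row k V,
      forall i : 'I_g, `|lam (lshift g i)| < 1
    & forall i : 'I_g, 1 < `|lam (rshift g i)| ].

(* Contracting subspace E^c (resp. expanding E^e): real vectors in the complex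
   span of the contracting (resp. expanding) eigenvectors. *)
Definition in_Ec (R : realType) g (V : 'M[R[i]]_(g + g)) (w : 'rV[R]_(g + g)) : Prop :=
  exists c : 'rV[R[i]]_g, mxRC w = c *m usubmx V.
Definition in_Ee (R : realType) g (V : 'M[R[i]]_(g + g)) (w : 'rV[R]_(g + g)) : Prop :=
  exists c : 'rV[R[i]]_g, mxRC w = c *m dsubmx V.

Definition meets_trivially (R : realType) g k (L : 'M[int]_(k, g + g))
  (E : 'rV[R]_(g + g) -> Prop) : Prop :=
  forall x : 'rV[R]_k, E (x *m @mxZR R _ _ L) -> x *m @mxZR R _ _ L = 0.

(* Main.v *)
Require Import Defs.
From HB Require Import structures.
From mathcomp Require Import all_boot all_order all_algebra.
From mathcomp Require Import complex.
From mathcomp Require Import reals.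
From mathcomp Require Import ring lra zify.
From mathcomp Require Import perm.
Import Order.TTheory GRing.Theory Num.Theory.
Set Implicit Arguments. Unset Strict Implicit. Unset Printing Implicit Defensive.
Local Open Scope ring_scope.
Section Perturb.
Variable F : numDomainType.

Lemma prod_norm_le n (a : 'I_n -> F) (B : F) :
  0 <= B -> (forall i, `|a i| <= B) -> `|\prod_i a i| <= B ^+ n.
Proof.
move=> B0 aB; rewrite normr_prod -[n in B ^+ n]card_ord -prodr_const.
by apply: ler_prod => i _; apply/andP; split; [exact: normr_ge0| exact: aB].
Qed.

Lemma prod_perturb n (a d : 'I_n -> F) (B e : F) :
  0 <= B -> 0 <= e -> e <= 1 -> (forall i, `|a i| <= B) -> (forall i, `|d i| <= e) ->
  `|\prod_i (a i + d i) - \prod_i a i| <= n%:R * (B+1)^+n * e.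
Proof.
move=> B0 e0 e1; elim: n a d => [|n IH] a d aB dB.
  by rewrite !big_ord0 subrr normr0 mul0r mul0r.
rewrite !big_ord_recr /=.
set Q := \prod_(i < n) _; set P := \prod_(i < n) _.
set x := a ord_max; set y := d ord_max.
have -> : Q * (x + y) - P * x = (Q - P) * (x + y) + P * y.
  by ring.
have B10 : 0 <= B + 1 by rewrite addr_ge0.
have B11 : 1 <= B + 1 by rewrite lerDr.
have hQP := IH (fun i => a (widen_ord (leqnSn n) i)) (fun i => d (widen_ord (leqnSn n) i))
   (fun i => aB _) (fun i => dB _).
have hxy : `|x + y| <= B + 1.
  by apply: le_trans (ler_normD _ _) _; apply: lerD; [apply: aB| apply: le_trans (dB _) e1].
have hP : `|P| <= (B+1) ^+ n.
  apply: prod_norm_le => // i; apply: le_trans (aB _) _; by rewrite lerDl.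
apply: le_trans (ler_normD _ _) _; rewrite !normrM.
have h1 : `|Q - P| * `|x + y| <= n%:R * (B + 1) ^+ n * e * (B + 1).
  by apply: ler_pM => //; exact: normr_ge0.
have h2 : `|P| * `|y| <= (B+1)^+n * e.
  by apply: ler_pM; [exact: normr_ge0|exact: normr_ge0|exact: hP|exact: dB].
apply: le_trans (lerD h1 h2) _.
have -> : n.+1%:R * (B + 1) ^+ n.+1 * e = n%:R * (B+1)^+n * e * (B+1) + (B+1)^+n * e * (B+1).
  by rewrite exprSr -natr1; ring.
rewrite lerD2l ler_peMr //; exact: mulr_ge0 (exprn_ge0 _ B10) e0.
Qed.

Lemma det_perturb n (M E : 'M[F]_n) (B e : F) :
  0 <= B -> 0 <= e -> e <= 1 -> (forall i j, `|M i j| <= B) -> (forall i j, `|E i j| <= e) ->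
  `|\det (M + E) - \det M| <= #|{perm 'I_n}|%:R * (n%:R * (B+1)^+n * e).
Proof.
move=> B0 e0 e1 MB EB; rewrite /determinant -sumrB.
apply: le_trans (ler_norm_sum _ _ _) _.
rewrite mulr_natl -sumr_const; apply: ler_sum => s _.
rewrite -mulrBr normrM normrX normrN normr1 expr1n mul1r.
have := @prod_perturb n (fun i => M i (s i)) (fun i => E i (s i)) B e B0 e0 e1 (fun i => MB _ _) (fun i => EB _ _).
have E1 : \prod_i (M + E) i (s i) = \prod_i (M i (s i) + E i (s i)) by apply: eq_bigr => i _; rewrite mxE.
by rewrite E1.
Qed.
End Perturb.
Section RealFacts.
Variable R : realType.

Lemma bernoulli_ge (h : R) K : 0 <= h -> 1 + K%:R * h <= (1 + h) ^+ K.
Proof.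
move=> h0; elim: K => [|K IH]; first by rewrite mul0r addr0 expr0.
rewrite exprS -natr1.
have hK : 0 <= K%:R * h by rewrite mulr_ge0.
have : (1 + h) * (1 + K%:R * h) <= (1 + h) * (1 + h) ^+ K.
  by rewrite ler_wpM2l // addr_ge0.
set X := (1 + h) ^+ K; set k := K%:R * h; move=> H.
have -> : 1 + (K%:R + 1) * h = 1 + k + h by rewrite /k; ring.
have hk : 0 <= h * k by rewrite mulr_ge0.
apply: le_trans H; nra.
Qed.

Lemma pow_small (p eps : R) : 0 <= p -> p < 1 -> 0 < eps ->
  exists K0, forall K, (K0 <= K)%N -> p ^+ K <= eps.
Proof.
move=> p0 p1 e0.
have [->|pn0] := eqVneq p 0.
  by exists 1%N => K K1; rewrite expr0n; case: K K1 => // K _ /=; rewrite ltW.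
have pp : 0 < p by rewrite lt0r pn0.
set h := p^-1 - 1.
have h0 : 0 < h by rewrite /h subr_gt0 invf_gt1.
have hq : p * (1 + h) = 1 by rewrite /h addrC subrK mulfV.
set y := (eps * h)^-1.
have y0 : 0 <= y by rewrite /y invr_ge0 ltW // mulr_gt0.
exists (Num.Def.archi_bound y) => K HK.
have Ky : y < K%:R.
  apply: lt_le_trans (archi_boundP y0) _; by rewrite ler_nat.
have B := bernoulli_ge K (ltW h0).
have pK : p ^+ K * (1 + h) ^+ K = 1 by rewrite -exprMn hq expr1n.
have Kh : 1 < eps * (K%:R * h).
  have : y * (eps * h) = 1 by rewrite /y mulVf // mulf_neq0 // ?gt_eqF // lt0r_neq0.
  move=> Hy.
  have : y * (eps * h) < K%:R * (eps * h) by rewrite ltr_pM2r // mulr_gt0.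
  rewrite Hy => H; apply: lt_le_trans H _; rewrite le_eqVlt; apply/orP; left; apply/eqP; ring.
have pK0 : 0 <= p ^+ K by rewrite exprn_ge0 // ltW.
set P := p ^+ K in pK pK0 *; set Q := (1 + h) ^+ K in B pK *.
set k := K%:R * h in B Kh *.
have k0 : 0 <= k by rewrite /k mulr_ge0 // ltW.
nra.
Qed.

Lemma small_pow_lemma (d : R) n : 0 <= d -> d <= 1 -> (1 + d) ^+ n <= 1 + d * (2 ^+ n - 1).
Proof.
move=> d0 d1; elim: n => [|n IH]; first by rewrite !expr0 subrr mulr0 addr0.
rewrite exprS [2 ^+ n.+1]exprS.
have X1 : 1 <= (2:R) ^+ n by rewrite exprn_ege1 // ler1n.
set X := (2:R) ^+ n in IH X1 *; set Y := (1 + d) ^+ n in IH *.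
have Y0 : 0 <= Y by rewrite exprn_ge0 // addr_ge0.
have h1 : (1 + d) * Y <= (1 + d) * (1 + d * (X - 1)) by rewrite ler_wpM2l // addr_ge0.
have h2 : 0 <= d * (1 - d) * (X - 1) by rewrite !mulr_ge0 // subr_ge0.
apply: le_trans h1 _; nra.
Qed.

Lemma root_exists (rho : R) n : 1 < rho -> exists r : R, 1 < r /\ r ^+ n <= rho.
Proof.
move=> r1.
have X1 : 1 <= (2:R) ^+ n by rewrite exprn_ege1 // ler1n.
set X := (2:R) ^+ n in X1 *.
set d := Num.min 1 ((rho - 1) / X).
have X0 : 0 < X by apply: lt_le_trans X1.
have d1 : d <= 1 by rewrite /d ge_min lexx.
have d2 : d <= (rho - 1) / X by rewrite /d ge_min lexx orbT.
have dp : 0 < d by rewrite /d lt_min ltr01 /= divr_gt0 // subr_gt0.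
exists (1 + d); split; first by rewrite ltrDl.
apply: le_trans (small_pow_lemma n (ltW dp) d1) _.
have : d * X <= rho - 1 by rewrite -ler_pdivlMr.
rewrite -/X; nra.
Qed.
End RealFacts.
Lemma int_unit_norm (x : int) : x \is a GRing.unit -> `|x| = 1.
Proof. by move=> /orP [] /eqP ->. Qed.

Lemma sum_to_col k1 k2 n (B1 : 'M[int]_(k1, n)) (B2 : 'M[int]_(k2, n)) v :
  in_sum_lattice B1 B2 v -> in_lattice (col_mx B1 B2) v.
Proof.
move=> [v1 [v2 [[c1 ->] [c2 ->] ->]]].
by exists (row_mx c1 c2); rewrite mul_row_col.
Qed.

Lemma index_lemma n (M : 'M[int]_n) (m : nat) : (0 < n)%N ->
  (m%:Z ^+ n <= `|\det M|) ->
  exists f : 'I_m -> 'rV[int]_n, forall i j, i != j -> ~ in_lattice M (f i - f j).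
Proof.
move=> n0 hm.
case: m hm => [|m] hm; first by exists (fun _ => 0) => [[]].
have [L uL [Rm uR [d _ EM]]] := int_Smith_normal_form M.
set D := \matrix_(i, j) _ in EM.
have ED : D = diag_mx (\row_i d`_i) by apply/matrixP => i j; rewrite !mxE.
have detM : `|\det M| = \prod_(i < n) `|d`_i|.
  rewrite EM !det_mulmx !normrM ED det_diag normr_prod.
  rewrite (int_unit_norm (_ : \det L \is a GRing.unit)) ?(int_unit_norm (_ : \det Rm \is a GRing.unit)) -?unitmxE //.
  by rewrite mul1r mulr1; apply: eq_bigr => i _; rewrite mxE.
have [j hj] : exists j : 'I_n, m.+1%:Z <= `|d`_j|.
  case: (pickP (fun j : 'I_n => m.+1%:Z <= `|d`_j|)) => [j hj|H]; first by exists j.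
  exfalso.
  have H' : forall j : 'I_n, `|d`_j| <= m%:Z.
    move=> j; have := H j; move/negbT; rewrite -ltNge => /=.
    by rewrite -[m.+1]addn1 PoszD ltzD1.
  have : `|\det M| <= m%:Z ^+ n.
    rewrite detM -[n in _ ^+ n]card_ord -prodr_const.
    by apply: ler_prod => i _; rewrite normr_ge0 H'.
  move=> /(le_trans hm); rewrite leNgt ltrXn2r //; last by rewrite ltz_nat.
  by rewrite -lt0n n0.
exists (fun i => (nat_of_ord i)%:Z *: (delta_mx 0 j *m Rm)) => i k ik [c hc].
rewrite -scalerBl EM !mulmxA in hc.
have := congr1 (fun X => X *m invmx Rm) hc.
rewrite /= -scalemxAl !mulmxK // => hc2.
rewrite ED mul_mx_diag in hc2.
have := congr1 (fun X : 'rV[int]_n => X 0 j) hc2.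
rewrite !mxE !eqxx /= mulr1.
set x := (\sum_(j0 < n) _) => Hik.
have nz : i%:Z - k%:Z != 0 by rewrite subr_eq0 eqz_nat.
have xn0 : x != 0 by apply: contraNneq nz => x0; rewrite Hik x0 mul0r.
have : `|i%:Z - k%:Z| < m.+1%:Z.
  have hi := ltn_ord i; have hk := ltn_ord k.
  rewrite ltr_norml; apply/andP; split; lia.
rewrite Hik normrM.
have : 1 <= `|x| by rewrite -gtz0_ge1 normr_gt0.
move=> x1 H2.
have := lt_le_trans H2 hj.
rewrite ltNge; move/negP; apply.
by rewrite ler_peMl // normr_ge0.
Qed.
Local Open Scope complex_scope.
Local Open Scope ring_scope.

Section Main.
Variable R : realType.
Variable g : nat.
Hypothesis g_gt0 : (0 < g)%N.
Variable A : 'M[int]_(g + g).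
Hypothesis A_GL : A \in unitmx.
Variable V : 'M[R[i]]_(g + g).
Variable lam : 'I_(g + g) -> R[i].
Hypothesis Vu : V \in unitmx.
Hypothesis eig : forall k, row k V *m (mxRC (@mxZR R _ _ A))^T = lam k *: row k V.
Hypothesis lamc : forall i : 'I_g, `|lam (lshift g i)| < 1.
Hypothesis lame : forall i : 'I_g, 1 < `|lam (rshift g i)|.

Definition ZC m n (M : 'M[int]_(m, n)) : 'M[R[i]]_(m, n) := map_mx intr M.

Lemma mxRC_ZC m n (M : 'M[int]_(m, n)) : mxRC (@mxZR R _ _ M) = ZC M.
Proof. by apply/matrixP => i j; rewrite !mxE rmorph_int. Qed.

Definition Ac := ZC A^T.
Definition Dl K : 'M[R[i]]_(g + g) := diag_mx (\row_k lam k ^+ K).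

Lemma AcE : Ac = (mxRC (@mxZR R _ _ A))^T.
Proof. by apply/matrixP => i j; rewrite !mxE rmorph_int. Qed.

Lemma eigV : V *m Ac = Dl 1 *m V.
Proof.
apply/row_matrixP => k; rewrite !row_mul AcE eig.
by rewrite /Dl row_diag_mx mxE expr1 -scalemxAl -rowE.
Qed.

Lemma eigVK K : V *m Ac ^+ K = Dl K *m V.
Proof.
elim: K => [|K IH].
  rewrite expr0 /Dl.
  have -> : (\row_k lam k ^+ 0) = const_mx 1 by apply/matrixP => i j; rewrite !mxE expr0.
  by rewrite diag_const_mx mul1mx -[1]/(1%:M) mulmx1.
rewrite exprSr -mulmxE mulmxA IH -mulmxA eigV mulmxA /Dl mulmx_diag.
congr (diag_mx _ *m _); apply/matrixP => i j; rewrite !mxE expr1 exprSr //.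
Qed.

Lemma ZC_exp (P : 'M[int]_(g + g)) K : ZC (P ^+ K) = ZC P ^+ K.
Proof.
elim: K => [|K IH]; first by rewrite !expr0 /ZC map_mx1.
rewrite !exprSr -!mulmxE -IH /ZC map_mxM //.
Qed.

Lemma ZC_conj m n (M : 'M[int]_(m, n)) : map_mx conjc (ZC M) = ZC M.
Proof. by apply/matrixP => i j; rewrite !mxE rmorph_int. Qed.

Lemma eigA k : row k V *m Ac = lam k *: row k V.
Proof. by rewrite AcE eig. Qed.

Lemma conj_coord k j : `|lam j| != `|lam k| ->
  (map_mx conjc (row k V) *m invmx V) 0 j = 0.
Proof.
move=> hne.
set y := map_mx conjc (row k V) *m invmx V.
have yV : y *m V = map_mx conjc (row k V) by rewrite /y mulmxKV.
have AcC : map_mx conjc Ac = Ac by apply: ZC_conj.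
have e1 : map_mx conjc (row k V) *m Ac = conjc (lam k) *: map_mx conjc (row k V).
  by rewrite -{1}AcC -map_mxM eigA map_mxZ.
have e2 : y *m Dl 1 = conjc (lam k) *: y.
  have : y *m Dl 1 *m V = (conjc (lam k) *: y) *m V.
    by rewrite -mulmxA -eigV mulmxA yV e1 -scalemxAl yV.
  by move/(congr1 (fun M => M *m invmx V)); rewrite !mulmxK.
have H : y 0 j * lam j = conjc (lam k) * y 0 j.
  by have := congr1 (fun M : 'rV_(g + g) => M 0 j) e2; rewrite /Dl mul_mx_diag !mxE expr1.
apply/eqP; apply: contraNT hne => yn0.
have : y 0 j * (lam j - conjc (lam k)) = 0 by rewrite mulrBr H mulrC subrr.
move/eqP; rewrite mulf_eq0 (negbTE yn0) /= subr_eq0 => /eqP ->.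
by rewrite normcJ.
Qed.

Lemma conj_sub_u : (map_mx conjc (usubmx V) <= usubmx V)%MS.
Proof.
apply/row_subP => k; rewrite -map_row row_usubmx.
set y := map_mx conjc (row (lshift g k) V) *m invmx V.
have yV : y *m V = map_mx conjc (row (lshift g k) V) by rewrite mulmxKV.
have yr : rsubmx y = 0.
  apply/matrixP => i j; rewrite (ord1 i) [LHS]mxE [RHS]mxE; apply: conj_coord.
  by rewrite gt_eqF // (lt_trans (lamc k) (lame j)).
have -> : map_mx conjc (row (lshift g k) V) = lsubmx y *m usubmx V.
  by rewrite -yV -{1}[y]hsubmxK -{1}[V]vsubmxK mul_row_col yr mul0mx addr0.
exact: submxMl.
Qed.

Lemma conj_sub_d : (map_mx conjc (dsubmx V) <= dsubmx V)%MS.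
Proof.
apply/row_subP => k; rewrite -map_row row_dsubmx.
set y := map_mx conjc (row (rshift g k) V) *m invmx V.
have yV : y *m V = map_mx conjc (row (rshift g k) V) by rewrite mulmxKV.
have yl : lsubmx y = 0.
  apply/matrixP => i j; rewrite (ord1 i) [LHS]mxE [RHS]mxE; apply: conj_coord.
  by rewrite lt_eqF // (lt_trans (lamc j) (lame k)).
have -> : map_mx conjc (row (rshift g k) V) = rsubmx y *m dsubmx V.
  by rewrite -yV -{1}[y]hsubmxK -{1}[V]vsubmxK mul_row_col yl mul0mx add0r.
exact: submxMl.
Qed.

Lemma triv_kernel (L : 'M[int]_(g, g + g)) (S : 'M[R[i]]_(g, g + g)) :
  \rank (@mxZR R _ _ L) = g -> (map_mx conjc S <= S)%MS ->
  meets_trivially L (fun w => exists c, mxRC w = c *m S) ->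
  forall x : 'rV[R[i]]_g, (x *m ZC L <= S)%MS -> x = 0.
Proof.
move=> rk hS htr x hx.
set a := map_mx (@complex.Re R) x; set b := map_mx (@complex.Im R) x.
have xE : x = mxRC a + 'i *: mxRC b.
  by apply/matrixP => i j; rewrite !mxE [LHS]complexE mulrC.
have xcE : map_mx conjc x = mxRC a - 'i *: mxRC b.
  apply/matrixP => i j; rewrite !mxE.
  by case: (x i j) => re im; apply/eqP; rewrite eq_complex /= !mul0r !mulr0 !mul1r !subr0 !add0r !eqxx.
set u := x *m ZC L.
have hu' : (map_mx conjc x *m ZC L <= S)%MS.
  have [c hc] := submxP hx.
  rewrite -ZC_conj -map_mxM (_ : x *m ZC L = c *m S) //.
  by rewrite map_mxM (submx_trans (submxMl _ _) hS).
have ha : (mxRC a *m ZC L <= S)%MS.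
  have -> : mxRC a *m ZC L = 2^-1 *: (u + map_mx conjc x *m ZC L).
    rewrite /u -mulmxDl xcE {1}xE addrACA subrr addr0 scalemxAl; congr (_ *m _).
    have -> : mxRC a + mxRC a = 2%:R *: mxRC a by rewrite scaler_nat mulr2n.
    by rewrite scalerA mulVf ?scale1r // pnatr_eq0.
  by rewrite scalemx_sub // addmx_sub.
have hb : (mxRC b *m ZC L <= S)%MS.
  have -> : mxRC b *m ZC L = (2 * 'i)^-1 *: (u - map_mx conjc x *m ZC L).
    rewrite /u -mulmxBl xcE {1}xE.
    have -> : mxRC a + 'i *: mxRC b - (mxRC a - 'i *: mxRC b) = (2 * 'i) *: mxRC b.
      by apply/matrixP => i j; rewrite !mxE; ring.
    have i0 : ('i%C : R[i]) != 0 by rewrite eq_complex /= oner_eq0 andbF.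
    by rewrite -scalemxAl scalerA mulVf ?scale1r // mulf_neq0 // pnatr_eq0.
  by rewrite scalemx_sub // addmx_sub // eqmx_opp.
have rf : row_free (@mxZR R _ _ L) by rewrite /row_free rk.
have h0 : forall c : 'rV[R]_g, (mxRC c *m ZC L <= S)%MS -> c = 0.
  move=> c hc; apply: (row_free_inj rf); rewrite mul0mx; apply: htr.
  have [d hd] := submxP hc; exists d.
  by rewrite -hd -mxRC_ZC /mxRC map_mxM.
by rewrite xE (h0 _ ha) (h0 _ hb) /mxRC map_mx0 scaler0 addr0.
Qed.

Variables Lp Lm : 'M[int]_(g, g + g).
Hypothesis Lp_rank : \rank (@mxZR R _ _ Lp) = g.
Hypothesis Lm_rank : \rank (@mxZR R _ _ Lm) = g.
Hypothesis Lp_tr : meets_trivially Lp (in_Ec V).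
Hypothesis Lm_tr : meets_trivially Lm (in_Ee V).

Definition X := ZC Lp *m invmx V.
Definition Y := ZC Lm *m invmx V.
Definition G K : 'M[int]_(g + g) := col_mx (Lp *m (A^T) ^+ K) Lm.

Lemma ZCG K : ZC (G K) = col_mx (X *m Dl K) Y *m V.
Proof.
rewrite mul_col_mx -!mulmxA -eigVK /X /Y !mulmxA !mulmxKV //.
by rewrite /Ac -ZC_exp /G /ZC map_col_mx map_mxM.
Qed.

Lemma ker_nz n (M : 'M[R[i]]_n) : ~~ (M \in unitmx) -> exists2 v : 'rV_n, v *m M = 0 & v != 0.
Proof.
rewrite -row_free_unit => nf.
have : kermx M != 0.
  rewrite -mxrank_eq0 mxrank_ker subn_eq0 -ltnNge.
  by rewrite ltn_neqAle rank_leq_row andbT; exact: nf.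
case/rowV0Pn => v /sub_kermxP hv vn0; by exists v.
Qed.

Lemma Xe_unit : rsubmx X \in unitmx.
Proof.
case/boolP: (rsubmx X \in unitmx) => // /ker_nz [v hv vn0].
exfalso; apply: (negP vn0); apply/eqP.
apply: (triv_kernel Lp_rank conj_sub_u Lp_tr).
have -> : ZC Lp = X *m V by rewrite /X mulmxKV.
rewrite -{1}[X]hsubmxK -{1}[V]vsubmxK mul_row_col mulmxDr !mulmxA hv mul0mx addr0.
exact: submxMl.
Qed.

Lemma Yc_unit : lsubmx Y \in unitmx.
Proof.
case/boolP: (lsubmx Y \in unitmx) => // /ker_nz [v hv vn0].
exfalso; apply: (negP vn0); apply/eqP.
apply: (triv_kernel Lm_rank conj_sub_d Lm_tr).
have -> : ZC Lm = Y *m V by rewrite /Y mulmxKV.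
rewrite -{1}[Y]hsubmxK -{1}[V]vsubmxK mul_row_col mulmxDr !mulmxA hv mul0mx add0r.
exact: submxMl.
Qed.

Definition Finf : 'M[R[i]]_(g + g) := block_mx 0 (rsubmx X) (lsubmx Y) 0.

Lemma Finf_det : \det Finf != 0.
Proof.
set P : 'M[R[i]]_(g + g) := block_mx 0 1%:M 1%:M 0.
have E : Finf *m P = block_mx (rsubmx X) 0 0 (lsubmx Y).
  by rewrite /Finf /P mulmx_block !mul0mx !mulmx0 !mulmx1 !addr0 !add0r.
have := congr1 determinant E; rewrite det_mulmx det_ublock => H.
have : \det (rsubmx X) * \det (lsubmx Y) != 0.
  by rewrite mulf_neq0 // -unitfE -unitmxE ?Xe_unit ?Yc_unit.
by rewrite -H; apply: contraNneq => ->; rewrite mul0r.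
Qed.

Definition isC (j : 'I_(g + g)) : bool := (j < g)%N.
Lemma isC_l i : isC (lshift g i) = true.
Proof. by rewrite /isC /= ltn_ord. Qed.
Lemma isC_r i : isC (rshift g i) = false.
Proof. by rewrite /isC /= ltnNge leq_addr. Qed.

Lemma lam_r_nz j : lam (rshift g j) != 0.
Proof. by apply: contraTneq (lame j) => ->; rewrite normr0 ltr10. Qed.

Definition cf K (i j : 'I_(g + g)) : R[i] :=
  if isC i then (if isC j then lam j ^+ K else 1)
  else (if isC j then 1 else (lam j ^+ K)^-1).
Definition sv K : 'rV[R[i]]_(g + g) := \row_j (if isC j then 1 else lam j ^+ K).
Definition W : 'M[R[i]]_(g + g) := col_mx X Y.
Definition FK K : 'M[R[i]]_(g + g) := \matrix_(i, j) (W i j * cf K i j).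

Lemma rsubE m n1 n2 (M : 'M[R[i]]_(m, n1 + n2)) i j : rsubmx M i j = M i (rshift n1 j).
Proof. by rewrite mxE. Qed.
Lemma lsubE m n1 n2 (M : 'M[R[i]]_(m, n1 + n2)) i j : lsubmx M i j = M i (lshift n2 j).
Proof. by rewrite mxE. Qed.
Lemma zeroE m n i j : (0 : 'M[R[i]]_(m, n)) i j = 0.
Proof. by rewrite mxE. Qed.
Lemma FKE K i j : FK K i j = W i j * cf K i j.
Proof. by rewrite /FK mxE. Qed.
Lemma WEu i j : W (lshift g i) j = X i j.
Proof. by rewrite /W col_mxEu. Qed.
Lemma WEd i j : W (rshift g i) j = Y i j.
Proof. by rewrite /W col_mxEd. Qed.
Lemma mxdE m n (M : 'M[R[i]]_(m, n)) (d : 'rV_n) i j : (M *m diag_mx d) i j = M i j * d 0 j.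
Proof. by rewrite mul_mx_diag mxE. Qed.
Lemma rowE' n (f : 'I_n -> R[i]) j : (\row_k f k) 0 j = f j.
Proof. by rewrite mxE. Qed.

Lemma colFK K : col_mx (X *m Dl K) Y = FK K *m diag_mx (sv K).
Proof.
apply/matrixP => i j; rewrite mxdE FKE /sv rowE'.
rewrite -(splitK i) -(splitK j).
case: (split i) => i'; case: (split j) => j' /=.
- by rewrite col_mxEu /Dl mxdE rowE' WEu /cf !isC_l mulr1.
- by rewrite col_mxEu /Dl mxdE rowE' WEu /cf isC_l isC_r mulr1.
- by rewrite col_mxEd WEd /cf isC_r isC_l !mulr1.
- rewrite col_mxEd WEd /cf !isC_r mulfVK //.
  by rewrite expf_neq0 // lam_r_nz.
Qed.

Lemma detG K : (\det (G K))%:~R = \det (FK K) * \prod_j sv K 0 j * \det V.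
Proof.
have := det_map_mx (intr : {rmorphism int -> R[i]}) (G K).
by rewrite /= -/(ZC _) => <-; rewrite ZCG colFK !det_mulmx det_diag.
Qed.

Definition pj (j : 'I_(g + g)) : R[i] := if isC j then `|lam j| else `|lam j|^-1.

Lemma EK_bound K i j : `|FK K i j - Finf i j| <= `|W i j| * pj j ^+ K.
Proof.
rewrite -(splitK i) -(splitK j).
case: (split i) => i'; case: (split j) => j' /=; rewrite FKE /Finf /pj /cf.
- by rewrite block_mxEul zeroE subr0 !isC_l normrM normrX.
- by rewrite block_mxEur rsubE WEu isC_l isC_r mulr1 subrr normr0 mulr_ge0 // exprn_ge0 // invr_ge0.
- by rewrite block_mxEdl lsubE WEd isC_r isC_l mulr1 subrr normr0 mulr_ge0 // exprn_ge0.
- by rewrite block_mxEdr zeroE subr0 !isC_r normrM normrV ?unitfE ?expf_neq0 ?lam_r_nz // normrX exprVn.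
Qed.

Lemma Finf_bound i j : `|Finf i j| <= `|W i j|.
Proof.
rewrite -(splitK i) -(splitK j).
case: (split i) => i'; case: (split j) => j' /=; rewrite /Finf.
- by rewrite block_mxEul zeroE normr0.
- by rewrite block_mxEur rsubE WEu.
- by rewrite block_mxEdl lsubE WEd.
- by rewrite block_mxEdr zeroE normr0.
Qed.

Definition nrm (z : R[i]) : R := complex.Re `|z|.
Lemma nrmE z : `|z| = (nrm z)%:C.
Proof. by rewrite /nrm normc_def. Qed.
Lemma nrm_ge0 z : 0 <= nrm z.
Proof. by rewrite -ler0c -nrmE normr_ge0. Qed.
Lemma nrmM x y : nrm (x * y) = nrm x * nrm y.
Proof. by apply: complexI; rewrite rmorphM -!nrmE normrM. Qed.
Lemma nrmXn x k : nrm (x ^+ k) = nrm x ^+ k.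
Proof. by apply: complexI; rewrite rmorphXn -!nrmE normrX. Qed.
Lemma nrmN x : nrm (- x) = nrm x.
Proof. by apply: complexI; rewrite -!nrmE normrN. Qed.
Lemma nrmD x y : nrm (x + y) <= nrm x + nrm y.
Proof. by rewrite -lecR rmorphD -!nrmE ler_normD. Qed.
Lemma nrm_int (d : int) : nrm (d%:~R) = `|d|%:~R.
Proof. by apply: complexI; rewrite -nrmE -intr_norm rmorph_int. Qed.
Lemma nrm_eq0 z : (nrm z == 0) = (z == 0).
Proof.
apply/eqP/eqP => [h|->]; last by apply: complexI; rewrite -nrmE normr0.
by apply/normr0_eq0; rewrite nrmE h.
Qed.
Lemma nrm_lt1 z : (`|z| < 1) = (nrm z < 1).
Proof. by rewrite nrmE -(rmorph1 (real_complex R)) ltcR. Qed.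
Lemma nrm_gt1 z : (1 < `|z|) = (1 < nrm z).
Proof. by rewrite nrmE -(rmorph1 (real_complex R)) ltcR. Qed.
Lemma nrm_prod n (F : 'I_n -> R[i]) : nrm (\prod_i F i) = \prod_i nrm (F i).
Proof.
apply: complexI; rewrite -nrmE normr_prod rmorph_prod.
by apply: eq_bigr => i _; rewrite nrmE.
Qed.
Lemma subE m n (M N : 'M[R[i]]_(m, n)) i j : (M - N) i j = M i j - N i j.
Proof. by rewrite !mxE. Qed.

Lemma sum_ge_term (I : finType) (F : I -> R) i : (forall k, 0 <= F k) -> F i <= \sum_k F k.
Proof. by move=> F0; rewrite (bigD1 i) //= lerDl sumr_ge0. Qed.

Lemma core : exists c0 : R, 0 < c0 /\ exists r0 : R, 1 < r0 /\
  exists K0, forall K, (K0 <= K)%N -> c0 * r0 ^+ K <= (`|\det (G K)|%:~R : R).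
Proof.
pose n := (g + g)%N.
pose bw : R := \sum_i \sum_j nrm (W i j).
have bw0 : 0 <= bw by apply: sumr_ge0 => i _; apply: sumr_ge0 => j _; exact: nrm_ge0.
have Wb i j : nrm (W i j) <= bw.
  have h1 : nrm (W i j) <= \sum_k nrm (W i k).
    by apply: (@sum_ge_term _ (fun k => nrm (W i k))) => k; exact: nrm_ge0.
  apply: le_trans h1 _.
  apply: (@sum_ge_term _ (fun i => \sum_k nrm (W i k))) => k.
  by apply: sumr_ge0 => l _; exact: nrm_ge0.
pose dl := nrm (\det Finf).
have dl0 : 0 < dl by rewrite lt0r nrm_eq0 Finf_det nrm_ge0.
pose Cst : R := #|{perm 'I_n}|%:R * (n%:R * (bw + 1) ^+ n).
have Cst0 : 0 <= Cst by rewrite mulr_ge0 // mulr_ge0 // exprn_ge0 // addr_ge0.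
pose eta := Num.min ((bw + 1)^-1) (dl / (2 * (Cst + 1) * (bw + 1))).
have bw1 : 0 < bw + 1 by rewrite ltr_wpDl.
have C1 : 0 < 2 * (Cst + 1) * (bw + 1) by rewrite !mulr_gt0 // ltr_wpDl.
have eta0 : 0 < eta by rewrite lt_min invr_gt0 bw1 divr_gt0.
have he1 : eta * (bw + 1) <= 1.
  by rewrite -ler_pdivlMr // div1r ge_min lexx.
have he2 : eta * (2 * (Cst + 1) * (bw + 1)) <= dl.
  by rewrite -ler_pdivlMr // ge_min lexx orbT.
pose pR (j : 'I_(g + g)) : R := if isC j then nrm (lam j) else (nrm (lam j))^-1.
have pR0 j : 0 <= pR j by rewrite /pR; case: ifP => _; rewrite ?invr_ge0 nrm_ge0.
have pR1 j : pR j < 1.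
  rewrite /pR -(splitK j); case: (split j) => j' /=; rewrite ?isC_l ?isC_r.
    by rewrite -nrm_lt1.
  by rewrite invf_lt1 -?nrm_gt1 // (lt_trans ltr01) // -nrm_gt1.
have pjE j : pj j = (pR j)%:C.
  by rewrite /pj /pR; case: ifP => _; rewrite nrmE // fmorphV.
have K0s : forall j, exists K0, forall K, (K0 <= K)%N -> pR j ^+ K <= eta.
  by move=> j; apply: pow_small.
have [f hf] := fin_all_exists K0s.
pose j0 := rshift g (Ordinal g_gt0).
pose r0 := nrm (lam j0).
have r01 : 1 < r0 by rewrite /r0 -nrm_gt1 lame.
pose v0 := nrm (\det V).
have v00 : 0 < v0.
  by rewrite lt0r nrm_eq0 -unitfE -unitmxE Vu nrm_ge0.
exists (dl / 2 * v0); split; first by rewrite mulr_gt0 // divr_gt0.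
exists r0; split => //.
exists (\max_j f j) => K HK.
have pK j : pR j ^+ K <= eta by apply: hf; apply: leq_trans HK; exact: leq_bigmax.
have EB i j : `|(FK K - Finf) i j| <= (bw * eta)%:C.
  rewrite subE; apply: le_trans (EK_bound K i j) _.
  rewrite pjE nrmE -rmorphXn -rmorphM lecR.
  apply: ler_pM; [exact: nrm_ge0|exact: exprn_ge0|exact: Wb|exact: pK].
have MB i j : `|Finf i j| <= bw%:C.
  by apply: le_trans (Finf_bound i j) _; rewrite nrmE lecR.
have bweta : bw * eta <= 1 by nra.
have hb0 : 0 <= bw%:C by rewrite ler0c.
have he0 : 0 <= (bw * eta)%:C by rewrite ler0c mulr_ge0 // ltW.
have he1' : (bw * eta)%:C <= 1 by rewrite -(rmorph1 (real_complex R)) lecR.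
have DP := det_perturb hb0 he0 he1' MB EB.
rewrite [Finf + _]addrC subrK in DP.
have e1 : (#|{perm 'I_(g + g)}|%:R * ((g + g)%:R * (bw%:C + 1) ^+ (g + g) * (bw * eta)%:C) : R[i])
   = (Cst * (bw * eta))%:C.
  rewrite /Cst !(rmorphM (real_complex R)) (rmorphXn (real_complex R)) (rmorphD (real_complex R)) (rmorph1 (real_complex R)) !(rmorph_nat (real_complex R)); by rewrite /n !mulrA.
rewrite e1 nrmE lecR in DP.
have DP' : dl <= nrm (\det (FK K)) + nrm (\det (FK K) - \det Finf).
  rewrite /dl {1}(_ : \det Finf = \det (FK K) + (- (\det (FK K) - \det Finf))); last first.
    by rewrite opprB addrC subrK.
  by apply: le_trans (nrmD _ _) _; rewrite nrmN.
have Ce : Cst * (bw * eta) <= dl / 2.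
  have : Cst * (bw * eta) <= eta * (2 * (Cst + 1) * (bw + 1)) / 2.
    have h0 : 0 <= Cst * bw by rewrite mulr_ge0.
    have h1 : 0 <= eta * Cst by rewrite mulr_ge0 // ltW.
    have h2 : 0 <= eta * bw by rewrite mulr_ge0 // ltW.
    nra.
  move=> H; apply: le_trans H _; rewrite ler_pdivlMr // divfK ?pnatr_eq0 //.
have hF : dl / 2 <= nrm (\det (FK K)) by lra.
have hP : r0 ^+ K <= nrm (\prod_j sv K 0 j).
  rewrite nrm_prod (bigD1 j0) //=.
  have -> : nrm (sv K 0 j0) = r0 ^+ K by rewrite /sv mxE /j0 isC_r nrmXn.
  rewrite -[X in X <= _]mulr1 ler_wpM2l ?exprn_ge0 ?(ltW (lt_trans ltr01 r01)) //.
  have hge : forall j : 'I_(g + g), j != j0 -> (0 : R) <= 1 <= nrm (sv K 0 j).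
    move=> j jn; rewrite ler01 /= /sv mxE.
    rewrite -(splitK j); case: (split j) => j' /=; rewrite ?isC_l ?isC_r.
      by rewrite /nrm normr1.
    by rewrite nrmXn exprn_ege1 // ltW // -nrm_gt1 lame.
  have := ler_prod (index_enum 'I_(g + g)) hge.
  by rewrite big1.
rewrite -nrm_int detG !nrmM.
have Pge : 0 <= r0 ^+ K by rewrite exprn_ge0 // ltW // (lt_trans ltr01).
set a := nrm (\det (FK K)) in hF *; set b := nrm (\prod_j sv K 0 j) in hP *.
have h3 : dl / 2 * r0 ^+ K <= a * b by apply: ler_pM => //; rewrite divr_ge0 // ltW.
rewrite mulrAC; apply: ler_wpM2r; [exact: ltW | exact: h3].
Qed.

End Main.

Lemma inv_exp_mul n (P Q : 'M[int]_n) N : Q *m P = 1%:M -> Q ^+ N *m P ^+ N = 1%:M.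
Proof.
move=> QP; elim: N => [|N IH]; first by rewrite !expr0 -[1]/(1%:M) mulmx1.
rewrite exprSr exprS -!mulmxE -mulmxA (mulmxA Q) QP mul1mx; exact: IH.
Qed.

Lemma det_exp_norm n (P : 'M[int]_n) N : `|\det P| = 1 -> `|\det (P ^+ N)| = 1.
Proof.
move=> h; elim: N => [|N IH]; first by rewrite expr0 -[1]/(1%:M) det1 normr1.
by rewrite exprS -mulmxE det_mulmx normrM h IH mul1r.
Qed.

Theorem lemma2p1 (R : realType) (g : nat) (g_gt0 : (0 < g)%N)
  (A : 'M[int]_(g + g)) (A_GL : A \in unitmx)
  (V : 'M[R[i]]_(g + g)) (lam : 'I_(g + g) -> R[i])
  (hyp : hyperbolic_basis A V lam)
  (Lp Lm : 'M[int]_(g, g + g))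
  (Lp_rank : \rank (@mxZR R _ _ Lp) = g) (Lm_rank : \rank (@mxZR R _ _ Lm) = g)
  (Lp_tr : meets_trivially Lp (in_Ec V))
  (Lm_tr : meets_trivially Lm (in_Ee V)) :
  exists C : R, 0 < C /\ exists r : R, 1 < r /\
    forall N : nat, (1 <= N)%N ->
      forall m : nat, m%:R <= C * r ^+ N ->
        quot_card_ge (Lp *m (A^T) ^+ N) (Lm *m (invmx A^T) ^+ N) m.
Proof.
case: hyp => Vu eig lamc lame.
have [c0 [c0p [r0 [r01 [K0 hK]]]]] := core g_gt0 Vu eig lamc lame Lp_rank Lm_rank Lp_tr Lm_tr.
have r00 : 0 < r0 by apply: lt_trans r01.
have rho1 : 1 < r0 ^+ 2 by rewrite expr_gt1 // ltW.
have [r [r1 rn]] := root_exists (g + g) rho1.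
have r0' : 0 < r by apply: lt_trans r1.
have rK0 : 0 < r ^+ K0 by rewrite exprn_gt0.
pose C := Num.min (Num.min 1 c0) ((2 * r ^+ K0)^-1).
have C0 : 0 < C by rewrite !lt_min ltr01 c0p /= invr_gt0 mulr_gt0.
have C1 : C <= 1 by rewrite /C !ge_min lexx.
have Cc : C <= c0 by rewrite /C !ge_min lexx orbT.
have C2 : C <= (2 * r ^+ K0)^-1 by rewrite /C ge_min lexx orbT.
exists C; split => //; exists r; split => // N _ m hm.
have [hN|hN] := leqP K0 (N + N).
-
  pose B1 := Lp *m A^T ^+ N; pose B2 := Lm *m invmx A^T ^+ N.
  have uAT : A^T \in unitmx by rewrite unitmx_tr.
  have hBA : invmx A^T ^+ N *m A^T ^+ N = 1%:M by apply: inv_exp_mul; rewrite mulVmx.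
  have EG : col_mx B1 B2 *m A^T ^+ N = G A Lp Lm (N + N).
    by rewrite mul_col_mx /B1 /B2 -!mulmxA hBA mulmx1 /G exprD mulmxE.
  have hdet : `|\det (col_mx B1 B2)| = `|\det (G A Lp Lm (N + N))|.
    rewrite -EG det_mulmx normrM det_exp_norm ?mulr1 //.
    by rewrite det_tr; apply: int_unit_norm; rewrite -unitmxE.
  have hm' : m%:Z ^+ (g + g) <= `|\det (col_mx B1 B2)|.
    rewrite hdet -(ler_int R) -[X in X <= _]/(_ : R).
    rewrite rmorphXn /= ; apply: le_trans (hK _ hN).
    have m0 : 0 <= (m%:Z)%:~R :> R by rewrite ler0z.
    have hm2 : (m%:Z)%:~R <= C * r ^+ N :> R by rewrite -pmulrn.
    have X1 : (m%:Z)%:~R \in @Num.nneg R by rewrite nnegrE.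
    have X2 : C * r ^+ N \in @Num.nneg R by rewrite nnegrE mulr_ge0 // ?exprn_ge0 // ltW.
    apply: le_trans (lerXn2r (g + g) X1 X2 hm2) _.
    rewrite exprMn -exprM mulnC exprM.
    have hC : C ^+ (g + g) <= c0.
      apply: le_trans Cc; case: (g + g)%N (addn_gt0 g g) => [|k _]; first by rewrite g_gt0.
      by rewrite exprS ger_pMr // exprn_ile1 // ltW.
    have -> : r0 ^+ (N + N) = (r0 ^+ 2) ^+ N by rewrite -exprM mul2n -addnn.
    apply: ler_pM; [exact: exprn_ge0 (ltW C0) | exact: exprn_ge0 (exprn_ge0 _ (ltW r0')) | exact: hC | ].
    have X3 : r ^+ (g + g) \in @Num.nneg R by rewrite nnegrE exprn_ge0 // ltW.
    have X4 : r0 ^+ 2 \in @Num.nneg R by rewrite nnegrE exprn_ge0 // ltW.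
    exact: (lerXn2r N X3 X4 rn).
  have gg : (0 < g + g)%N by rewrite addn_gt0 g_gt0.
  have [f hf] := index_lemma gg hm'.
  exists f => i j ij /sum_to_col; exact: hf.
- (* small N: m = 0 *)
  have : m%:R < (1 : R).
    apply: le_lt_trans hm _.
    have hr : r ^+ N <= r ^+ K0.
      by rewrite ler_eXn2l //; apply: leq_trans (ltnW hN); rewrite leq_addr.
    apply: le_lt_trans (ler_pM (ltW C0) (exprn_ge0 _ (ltW r0')) C2 hr) _.
    by rewrite invfM -mulrA mulVf ?gt_eqF // mulr1 invf_lt1 // ltr1n.
  rewrite ltrn1 ltnS leqn0 => /eqP ->.
  by exists (fun _ => 0) => [[]].
Qed.
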